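(* Let $p$ be an odd prime, let $n$ be the multiplicative order of $2$ modulo $p$, and let $e$ be the multiplicative order of $p$ modulo $3n$. Suppose that $e>1$. Set $q=p^a$ where $a\not\equiv 0\pmod e$, and suppose further that $q\equiv 1\pmod 6$. Then for any primitive element $\rho$ of $\mathbb F_q$, the cyclotomic number $c^3_q(1,2)$ is odd.
   Context: Write $q=6r+1$; for $i\in\mathbb Z_3$, $C^3_q(i)=\{\rho^{3j+i}: 0\le j\le 2r-1\}$, and $c^3_q(a,b)=|(C^3_q(a)+1)\cap C^3_q(b)|$ for $a,b\in\mathbb Z_3$. *)

(* Defs.v *)
From HB Require Import structures.
From mathcomp Require Import all_boot all_order all_algebra all_field.
Set Implicit Arguments. Unset Strict Implicit. Unset Printing Implicit Defensive.
Import GRing.Theory.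
Local Open Scope ring_scope.

Definition is_mult_order (x m n : nat) : Prop :=
  [/\ (0 < n)%N, x ^ n = 1 %[mod m]
    & forall k, (0 < k)%N -> x ^ k = 1 %[mod m] -> (n <= k)%N].

(* Cyclotomic class C^3_q(i) = { rho^(3j+i) : 0 <= j <= 2r-1 }, q = #|F| = 6r+1,
   so 2r = (q-1)/3. *)
Definition cycl_class (F : finFieldType) (rho : F) (i : nat) : {set F} :=
  [set rho ^+ (3 * j + i)%N | j : 'I_((#|F| - 1) %/ 3)].

Definition cycl_num (F : finFieldType) (rho : F) (a b : nat) : nat :=
  #|[set y : F | (y - 1 \in cycl_class rho a) && (y \in cycl_class rho b)]|.

(* Main.v *)
Require Import Defs.
From HB Require Import structures.
From mathcomp Require Import all_boot all_order all_algebra all_field.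
From mathcomp Require Import ring zify.
Import GRing.Theory.
Set Implicit Arguments. Unset Strict Implicit.
Local Open Scope ring_scope.

Definition fF (F : finFieldType) := ((#|F| - 1) %/ 3)%N.
Definition cls (F : finFieldType) (rho : F) (i : nat) (x : F) :=
  (x != 0) && ((x / rho ^+ i) ^+ fF F == 1).

Lemma prim_neq0 (F : finFieldType) (rho : F) :
  (0 < #|F|.-1)%N -> (#|F|.-1).-primitive_root rho -> rho != 0.
Proof.
move=> H Hr; apply/eqP=> r0; move: (prim_expr_order Hr); rewrite r0 expr0n.
by rewrite eqn0Ngt H /= => /eqP; rewrite eq_sym oner_eq0.
Qed.

Lemma memC (F : finFieldType) (rho : F) i x :
  #|F|.-1 = (3 * fF F)%N -> (0 < fF F)%N -> (#|F|.-1).-primitive_root rho ->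
  (x \in cycl_class rho i) = cls rho i x.
Proof.
move=> Hq Hf Hr.
have r0 : rho != 0 by apply: prim_neq0 Hr; rewrite Hq muln_gt0.
have ru : forall k, rho ^+ k \is a GRing.unit by move=> k; rewrite unitfE expf_neq0.
rewrite /cycl_class /cls; apply/idP/idP.
  case/imsetP=> j _ ->; apply/andP; split; first by rewrite expf_neq0.
  rewrite exprD mulrK // -exprM; rewrite -(prim_order_dvd Hr) Hq.
  by rewrite mulnAC dvdn_mulr.
case/andP=> xn0 /eqP hx; apply/imsetP.
have hy : (x / rho ^+ i) ^+ #|F|.-1 = 1 by rewrite Hq mulnC exprM hx expr1n.
case: (prim_rootP Hr hy) => k hk.
have : (3 * fF F %| k * fF F)%N.
  by rewrite -Hq (prim_order_dvd Hr) exprM -hk hx.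
rewrite dvdn_pmul2r // => /dvdnP[m hm].
have hmf : (m < fF F)%N.
  have := ltn_ord k; move: (val k) hm => kk -> ; rewrite Hq mulnC ltn_pmul2l //.
exists (Ordinal hmf); first by [].
by rewrite exprD mulnC -hm -hk divrK.
Qed.

Lemma cls_neq0 (F : finFieldType) (rho : F) i x : cls rho i x -> x != 0.
Proof. by case/andP. Qed.

Lemma cls_mul (F : finFieldType) (rho : F) i j x y :
  cls rho i x -> cls rho j y -> cls rho (i + j) (x * y).
Proof.
case/andP=> x0 /eqP hx /andP[y0 /eqP hy]; apply/andP; split; first by rewrite mulf_neq0.
by rewrite exprD invfM mulrACA exprMn hx hy mulr1.
Qed.

Lemma cls_shift (F : finFieldType) (rho : F) i x :
  #|F|.-1 = (3 * fF F)%N -> (#|F|.-1).-primitive_root rho ->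
  cls rho (i + 3) x = cls rho i x.
Proof.
move=> Hq Hr; rewrite /cls exprD invfM mulrA exprMn exprVn -exprM -Hq.
by rewrite (prim_expr_order Hr) invr1 mulr1.
Qed.

Lemma cls_inv (F : finFieldType) (rho : F) i x :
  #|F|.-1 = (3 * fF F)%N -> (#|F|.-1).-primitive_root rho -> (0 < fF F)%N ->
  cls rho i x -> cls rho (2 * i) x^-1.
Proof.
move=> Hq Hr Hf /andP[x0 /eqP hx]; apply/andP; split; first by rewrite invr_eq0.
have r0 : rho != 0 by apply: prim_neq0 Hr; rewrite Hq muln_gt0.
have t0 : rho ^+ i != 0 by rewrite expf_neq0.
have -> : x^-1 / rho ^+ (2 * i) = (x / rho ^+ i)^-1 / (rho ^+ i) ^+ 3.
  rewrite mulnC exprM; field; by rewrite x0 t0.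
rewrite exprMn exprVn hx invr1 mul1r exprVn -!exprM -mulnA -Hq.
by rewrite mulnC exprM (prim_expr_order Hr) expr1n invr1.
Qed.

Lemma cls_m1 (F : finFieldType) (rho : F) : ~~ odd (fF F) -> cls rho 0 (-1).
Proof.
move=> he; apply/andP; split; first by rewrite oppr_eq0 oner_eq0.
have [m ->] : exists m, fF F = (2 * m)%N by exists (fF F %/ 2)%N; lia.
by rewrite expr0 divr1 exprM sqrrN !expr1n.
Qed.

Lemma cls_opp (F : finFieldType) (rho : F) i x :
  ~~ odd (fF F) -> cls rho i x -> cls rho i (- x).
Proof. move=> he hx; rewrite -mulN1r -(add0n i); exact: cls_mul (cls_m1 _ he) hx. Qed.

Lemma cls_disj (F : finFieldType) (rho : F) i j x :
  #|F|.-1 = (3 * fF F)%N -> (#|F|.-1).-primitive_root rho -> (0 < fF F)%N ->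
  (i < 3)%N -> (j < 3)%N -> cls rho i x -> cls rho j x -> i = j.
Proof.
move=> Hq Hr Hf.
have r0 : rho != 0 by apply: prim_neq0 Hr; rewrite Hq muln_gt0.
wlog le_ij : i j / (i <= j)%N.
  move=> H hi hj ci cj; case: (leqP i j) => h; first exact: H.
  by apply/esym/H => //; apply: ltnW.
move=> hi hj /andP[x0 /eqP ci] /andP[_ /eqP cj].
have : (rho ^+ (j - i)) ^+ fF F = 1.
  have e : rho ^+ j = rho ^+ i * rho ^+ (j - i) by rewrite -exprD subnKC.
  move: cj; rewrite e invfM mulrA exprMn ci mul1r exprVn => /eqP.
  by rewrite invr_eq1 => /eqP.
move/eqP; rewrite -exprM -(prim_order_dvd Hr) Hq dvdn_pmul2r // => /dvdnP[m hm].
lia.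
Qed.

Lemma cls_cover (F : finFieldType) (rho : F) x :
  #|F|.-1 = (3 * fF F)%N -> (#|F|.-1).-primitive_root rho -> (0 < fF F)%N ->
  x != 0 -> [|| cls rho 0 x, cls rho 1 x | cls rho 2 x].
Proof.
move=> Hq Hr Hf x0.
have hx : x ^+ #|F|.-1 = 1.
  apply: (mulIf x0); rewrite mul1r -exprSr prednK ?expf_card //.
  by apply/card_gt0P; exists 0.
case: (prim_rootP Hr hx) => k hk.
have hm : (k %/ 3 < fF F)%N.
  by have := ltn_ord k; move: (val k) => kk; rewrite Hq; lia.
have : x \in cycl_class rho (k %% 3).
  apply/imsetP; exists (Ordinal hm) => //=.
  by rewrite hk mulnC -divn_eq.
rewrite memC //.
have : (k %% 3 < 3)%N by rewrite ltn_mod.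
by case: (k %% 3)%N => [|[|[|]]] // _ ->; rewrite ?orbT.
Qed.

Lemma card_le_map (F : finType) (A B : {set F}) (g : F -> F) :
  injective g -> (forall y, y \in A -> g y \in B) -> (#|A| <= #|B|)%N.
Proof.
move=> ig H; rewrite -(card_imset A ig); apply: subset_leq_card.
by apply/subsetP=> _ /imsetP[y yA ->]; apply: H.
Qed.

Lemma even_inv (T : finType) (S : {set T}) (g : T -> T) :
  (forall x, x \in S -> [/\ g x \in S, g (g x) = x & g x != x]) -> ~~ odd #|S|.
Proof.
move: {2}#|S| (leqnn #|S|) => n; elim: n S => [|n IH] S hS H.
  by move: hS; rewrite leqn0 => /eqP ->.
case: (set_0Vmem S) => [-> | [x xS]]; first by rewrite cards0.
have [gxS ggx gxx] := H x xS.
set S' := S :\ x :\ g x.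
have hc : #|S| = (#|S'| + 2)%N.
  rewrite (cardsD1 x S) xS (cardsD1 (g x) (S :\ x)) !inE gxx gxS /=.
  by rewrite /S'; lia.
rewrite hc addn2 /= negbK.
apply: IH; first by move: hS; rewrite hc; lia.
move=> y; rewrite !inE => /and3P[ygx yx yS].
have [gyS ggy gyy] := H y yS.
split=> //; rewrite gyS andbT; apply/andP; split.
  by apply/negP=> /eqP e; move/eqP: yx; apply; rewrite -ggy e ggx.
by apply/negP=> /eqP e; move/eqP: ygx; apply; rewrite -ggy e.
Qed.

Lemma cls_cases (F : finFieldType) (rho : F) y :
  #|F|.-1 = (3 * fF F)%N -> (#|F|.-1).-primitive_root rho -> (0 < fF F)%N ->
  [\/ [/\ y = 0, cls rho 0 y = false, cls rho 1 y = false & cls rho 2 y = false],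
      [/\ y != 0, cls rho 0 y = true, cls rho 1 y = false & cls rho 2 y = false],
      [/\ y != 0, cls rho 0 y = false, cls rho 1 y = true & cls rho 2 y = false] |
      [/\ y != 0, cls rho 0 y = false, cls rho 1 y = false & cls rho 2 y = true]].
Proof.
move=> Hq Hr Hf.
have d := @cls_disj F rho _ _ y Hq Hr Hf.
have [->|y0] := eqVneq y 0.
  by apply: Or41; rewrite /cls !eqxx.
have := cls_cover Hq Hr Hf y0.
case c0: (cls rho 0 y); case c1: (cls rho 1 y); case c2: (cls rho 2 y) => //= _.
- by have := d 0%N 1%N erefl erefl c0 c1.
- by have := d 0%N 1%N erefl erefl c0 c1.
- by have := d 0%N 2%N erefl erefl c0 c2.
- by apply: Or42.
- by have := d 1%N 2%N erefl erefl c1 c2.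
- by apply: Or43.
- by apply: Or44.
Qed.

Lemma key (F : finFieldType) (rho : F) :
  #|F|.-1 = (3 * fF F)%N -> (#|F|.-1).-primitive_root rho -> (0 < fF F)%N ->
  ~~ odd (fF F) -> ~~ cls rho 0 (1 + 1) -> odd (cycl_num rho 1 2).
Proof.
move=> Hq Hr Hf He n2.
have r0 : rho != 0 by apply: prim_neq0 Hr; rewrite Hq muln_gt0.
pose K i := [set x | cls rho i x].
pose A i := [set y | cls rho i (y - 1)].
have cE : forall a b, cycl_num rho a b = #|A a :&: K b|.
  by move=> a b; rewrite /cycl_num; apply: eq_card => y; rewrite !inE !memC.
have part : forall B, #|B :\ 0| = (#|B :&: K 0%N| + #|B :&: K 1%N| + #|B :&: K 2%N|)%N.
  move=> B; rewrite -(cardsID (K 0%N) (B :\ 0)) -(cardsID (K 1%N) ((B :\ 0) :\: K 0%N)).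
  have e1 : (B :\ 0) :&: K 0%N = B :&: K 0%N.
    by apply/setP=> y; rewrite !inE; case: (cls_cases y Hq Hr Hf) => [][e c0 c1 c2]; rewrite ?c0 ?c1 ?c2 ?e ?eqxx ?andbF.
  have e2 : ((B :\ 0) :\: K 0%N) :&: K 1%N = B :&: K 1%N.
    by apply/setP=> y; rewrite !inE; case: (cls_cases y Hq Hr Hf) => [][e c0 c1 c2]; rewrite ?c0 ?c1 ?c2 ?e ?eqxx ?andbF.
  have e3 : ((B :\ 0) :\: K 0%N) :\: K 1%N = B :&: K 2%N.
    by apply/setP=> y; rewrite !inE; case: (cls_cases y Hq Hr Hf) => [][e c0 c1 c2]; rewrite ?c0 ?c1 ?c2 ?e ?eqxx ?andbF ?andbT.
  by rewrite e1 e2 e3 addnA.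
have m1 : cls rho 0 (-1) := cls_m1 rho He.
have hA : #|A 0%N| = #|A 1%N|.
  have rho1 : cls rho 1 rho.
    by rewrite /cls r0 expr1 (mulfV r0) expr1n eqxx.
  have rhoi : cls rho 2 rho^-1 := cls_inv Hq Hr Hf rho1.
  apply/eqP; rewrite eqn_leq; apply/andP; split.
    apply: (@card_le_map _ _ _ (fun y => rho * (y - 1) + 1)).
      by move=> y z /addIr /(mulfI r0) /addIr.
    move=> y; rewrite !inE addrK => h.
    by have := cls_mul rho1 h.
  apply: (@card_le_map _ _ _ (fun y => rho^-1 * (y - 1) + 1)).
    by move=> y z /addIr /(mulfI (invr_neq0 r0)) /addIr.
  move=> y; rewrite !inE addrK => h.
  by have := cls_mul rhoi h; rewrite -[(2 + 1)%N]/(0 + 3)%N cls_shift.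
have A0 : 0 \in A 0%N by rewrite inE sub0r.
have A1 : 0 \notin A 1%N.
  rewrite inE sub0r; apply/negP => h.
  by have := @cls_disj F rho 0 1 (-1) Hq Hr Hf erefl erefl m1 h.
have swap : forall a b, #|A a :&: K b| = #|A b :&: K a|.
  suff H : forall a b, (#|A a :&: K b| <= #|A b :&: K a|)%N.
    by move=> a b; apply/eqP; rewrite eqn_leq !H.
  move=> a b; apply: (@card_le_map _ _ _ (fun y => 1 - y)).
    by move=> y z /addrI /oppr_inj.
  move=> y; rewrite !inE => /andP[h1 h2]; apply/andP; split.
    by rewrite addrAC subrr sub0r; apply: cls_opp.
  by rewrite -opprB; apply: cls_opp.
have c11 : #|A 1%N :&: K 1%N| = #|A 0%N :&: K 2%N|.
  apply/eqP; rewrite eqn_leq; apply/andP; split.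
    apply: (@card_le_map _ _ _ (fun y => (1 - y)^-1)).
      by move=> y z /invr_inj /addrI /oppr_inj.
    move=> y; rewrite !inE => /andP[h1 h2].
    have u1 : cls rho 1 (1 - y) by rewrite -opprB; apply: cls_opp.
    have u0 := cls_neq0 u1.
    have u2 := cls_inv Hq Hr Hf u1.
    apply/andP; split; last by [].
    have -> : (1 - y)^-1 - 1 = y * (1 - y)^-1.
      by field; rewrite u0.
    by rewrite -cls_shift //; apply: (cls_mul h2 u2).
  apply: (@card_le_map _ _ _ (fun y => 1 - y^-1)).
    by move=> y z /addrI /oppr_inj /invr_inj.
  move=> y; rewrite !inE => /andP[h1 h2].
  have y0 := cls_neq0 h2.
  have u := cls_inv Hq Hr Hf h2.
  apply/andP; split.
    rewrite addrAC subrr sub0r -cls_shift //; exact: cls_opp.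
  have -> : 1 - y^-1 = (y - 1) * y^-1 by field.
  by rewrite -cls_shift //; apply: (cls_mul h1 u).
have hS : #|A 1%N :&: K 2%N| = (1 + #|A 0%N :&: K 0%N|)%N.
  have := part (A 0%N); have := part (A 1%N).
  have := cardsD1 0 (A 0%N); have := cardsD1 0 (A 1%N).
  rewrite A0 (negbTE A1) hA (swap 1%N 0%N) c11 => ->.
  rewrite /nat_of_bool => h1 h2 h3; rewrite h2 h3 in h1. move: h1. set u := #|A 0%N :&: K 0%N|. set v := #|A 1%N :&: K 2%N|. set w1 := #|A 0%N :&: K 1%N|. set w2 := #|A 0%N :&: K 2%N|. lia.
have ev : ~~ odd #|A 0%N :&: K 0%N|.
  apply: (@even_inv _ _ (fun y => y / (y - 1))).
  move=> y; rewrite !inE => /andP[h1 h2].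
  have y0 := cls_neq0 h2; have y1 := cls_neq0 h1.
  have u := cls_inv Hq Hr Hf h1.
  have e1 : y / (y - 1) - 1 = (y - 1)^-1 by field; rewrite y1.
  split.
  - by rewrite e1; apply/andP; split; [exact: u | exact: (cls_mul h2 u)].
  - by rewrite e1 invrK divfK.
  - apply/negP=> /eqP e.
    have : (y - 1)^-1 = 1.
      by apply: (mulfI y0); rewrite mulr1.
    move/(congr1 GRing.inv); rewrite invrK invr1 => /eqP; rewrite subr_eq => /eqP ey.
    by move: n2; rewrite -ey h2.
by rewrite cE hS /= ev.
Qed.

Lemma t2 (q f : nat) : (q = 1 %[mod 6])%N -> (1 < q)%N -> [/\ q.-1 = 3 * ((q - 1) %/ 3), (0 < (q - 1) %/ 3) & ~~ odd ((q-1) %/ 3)]%N.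
Proof. move=> h1 h2. have [t ht] : exists t, (q = 6 * t + 1)%N by exists (q %/ 6)%N; lia.
subst. split; try lia. Qed.

Local Close Scope ring_scope.

Lemma ord_dvd x m n k : is_mult_order x m n -> x ^ k = 1 %[mod m] -> n %| k.
Proof.
case=> n0 hn hmin hk.
have h1 : x ^ (k %% n) = 1 %[mod m].
  have e : x ^ k = (x ^ n) ^ (k %/ n) * x ^ (k %% n).
    by rewrite -expnM -expnD mulnC -divn_eq.
  have h2 : (x ^ n) ^ (k %/ n) = 1 %[mod m].
    by rewrite -modnXm hn modnXm exp1n.
  by rewrite -hk e -modnMml h2 modnMml mul1n.
case: (posnP (k %% n)) => [h0|hp]; first by rewrite /dvdn h0.
by have := hmin _ hp h1; rewrite leqNgt ltn_pmod.
Qed.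

Unset Implicit Arguments.
Theorem corollary3p8 (p n e a : nat) :
  prime p -> odd p ->
  is_mult_order 2 p n ->
  is_mult_order p (3 * n) e ->
  1 < e ->
  ~~ (e %| a) ->
  p ^ a = 1 %[mod 6] ->
  forall (F : finFieldType), #|F| = p ^ a ->
  forall rho : F, ((#|F|.-1).-primitive_root rho)%R ->
  odd (cycl_num rho 1 2).
Proof.
move=> pp po h2 hp he1 hea h6 F HF rho Hr.
have a0 : 0 < a by case: a hea h6 HF => // ; rewrite dvdn0.
have p1 : 1 < p by rewrite prime_gt1.
have q1 : 1 < #|F|.
  rewrite HF; apply: (leq_trans p1); rewrite -{1}(expn1 p) leq_pexp2l //; lia.
have h6' : #|F| = 1 %[mod 6] by rewrite HF.
have [Hq Hf He] := t2 0 h6' q1.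
have pc : (p \in [char F])%R := card_finPcharP HF pp.
apply: key => //.
apply/negP => /andP[_]; rewrite GRing.expr0 GRing.divr1 => /eqP h.
have h' : (((2 ^ fF F).-1)%:R = 0 :> F)%R.
  have : ((2 ^ fF F)%:R = 1 :> F)%R by rewrite GRing.natrX; exact: h.
  rewrite -(prednK (expn_gt0 2 (fF F))) GRing.mulrSr => /eqP.
  by rewrite -GRing.subr_eq0 GRing.addrK => /eqP.
have hd : p %| (2 ^ fF F).-1 by rewrite (dvdn_pcharf pc) h'.
have hm : 2 ^ fF F = 1 %[mod p].
  by apply/eqP; rewrite eqn_mod_dvd ?expn_gt0 // subn1.
have nf := ord_dvd h2 hm.
have hq : p ^ a = 1 %[mod 3 * n].
  apply/eqP; rewrite eqn_mod_dvd ?expn_gt0 ?prime_gt0 // subn1 -HF Hq.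
  by rewrite dvdn_pmul2l.
by move: hea; rewrite (ord_dvd hp hq).
Qed.
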